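(* Let $n,t,k$ be integers with $n\geq 2t\geq 2$ and $k\geq 2$. Then \[P_k(n,t)\leq P_k(t)\,A_k(n-2t,0^t),\] where $0^t$ denotes the word consisting of $t$ zeros.
   Context: Words are over $\Sigma_k=\{0,1,\ldots,k-1\}$. A border of a word $w$ is a non-empty word that is both a proper prefix and a proper suffix of $w$. A word $w$ is closed by a word $u$ if $u$ is a border of $w$ and $u$ occurs exactly twice in $w$ as a factor (overlapping occurrences counted). A word $w$ is privileged if $|w|\leq 1$ or if $w$ is closed by some privileged word. $P_k(m)$ denotes the number of privileged words of length $m$ over $\Sigma_k$, and $P_k(n,t)$ denotes the number of privileged words of length $n$ over $\Sigma_k$ that are closed by a privileged word of length $t$. $A_k(m,v)$ denotes the number of words of length $m$ over $\Sigma_k$ that do not contain $v$ as a factor (for $m=0$ the empty word is counted). *)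

(* Defs.v *)
From mathcomp Require Import all_boot.
Set Implicit Arguments. Unset Strict Implicit. Unset Printing Implicit Defensive.

Section Words.
Variable T : eqType.

Definition border (u w : seq T) : bool :=
  [&& 0 < size u, size u < size w, prefix u w & suffix u w].

Definition occ (u w : seq T) : nat :=
  count (fun i => take (size u) (drop i w) == u) (iota 0 (size w - size u).+1).

Definition closed_by (w u : seq T) : bool := border u w && (occ u w == 2).

Fixpoint priv_aux (fuel : nat) (w : seq T) : bool :=
  if size w <= 1 then true else
  match fuel with
  | 0 => false
  | f.+1 => has (fun i => closed_by w (take i w) && priv_aux f (take i w))
                (iota 1 (size w).-1)
  end.

Definition privileged (w : seq T) : bool := priv_aux (size w) w.
End Words.

Definition Pk (k m : nat) : nat :=
  #|[set w : m.-tuple 'I_k | privileged (tval w)]|.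

Definition Pknt (k n t : nat) : nat :=
  #|[set w : n.-tuple 'I_k |
      privileged (tval w) &&
      [exists u : t.-tuple 'I_k, closed_by (tval w) (tval u) && privileged (tval u)]]|.

Definition Ak (k m : nat) (v : seq nat) : nat :=
  #|[set w : m.-tuple 'I_k | ~~ infix v (map val (tval w))]|.

(* Main.v *)
Require Import Defs.
From mathcomp Require Import all_boot.
From mathcomp Require Import zify.

Section Enc.
Variable k : nat.
Local Notation T := ('I_k.+1).
Variable u : seq T.

Definition st (p : seq T) : nat :=
  \max_(s < (size u).+1 | suffix (take s u) p) s.

Lemma st_spec p : st p <= size u /\ suffix (take (st p) u) p.
Proof.
rewrite /st.
have H0 : 0 < #|[pred s : 'I_(size u).+1 | suffix (take s u) p]|.
  apply/card_gt0P; exists ord0; rewrite inE /= take0.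
  by apply/suffixP; exists p; rewrite cats0.
have [i0 Hi ->] := eq_bigmax_cond (fun s : 'I_(size u).+1 => val s) H0.
by split; [rewrite -ltnS ltn_ord | rewrite inE in Hi].
Qed.

Lemma st_ge p s : s <= size u -> suffix (take s u) p -> s <= st p.
Proof.
move=> Hs Hsuf; rewrite /st -ltnS in Hs.
exact: (leq_bigmax_cond (Ordinal Hs) Hsuf).
Qed.

Lemma st_step p : st p < size u -> st p < st (rcons p (nth ord0 u (st p))).
Proof.
move=> Hlt; apply: st_ge => //.
rewrite (take_nth ord0 Hlt).
have [_ Hs] := st_spec p.
set a := nth ord0 u (st p); move: Hs; set s := take (st p) u.
by case/suffixP => q ->; rewrite rcons_cat suffix_suffix.
Qed.

Definition code (c a : T) : T :=
  if a == c then ord0 else if a == ord0 then c else a.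

Lemma codeK c : involutive (code c).
Proof.
move=> a; rewrite /code.
case: (eqVneq a c) => [->|Hac]; first by rewrite eqxx; case: (eqVneq ord0 c) => [->|].
case: (eqVneq a ord0) => [->|Ha0]; first by rewrite eqxx.
by rewrite (negbTE Hac) (negbTE Ha0).
Qed.

Lemma code_inj c : injective (code c).
Proof. exact: inv_inj (codeK c). Qed.

Lemma code0 c a : (code c a == ord0) = (a == c).
Proof.
have E : code c ord0 = c.
  by rewrite /code; case: (eqVneq ord0 c) => [->|]; rewrite ?eqxx.
by rewrite -{1}(codeK c ord0) (inj_eq (code_inj c)) E.
Qed.

Fixpoint enc (p x : seq T) : seq T :=
  match x with
  | [::] => [::]
  | a :: x' => code (nth ord0 u (st p)) a :: enc (rcons p a) x'
  end.

Lemma size_enc p x : size (enc p x) = size x.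
Proof. by elim: x p => [|a x IH] p //=; rewrite IH. Qed.

Lemma enc_inj p x y : enc p x = enc p y -> x = y.
Proof.
elim: x p y => [|a x IH] p [|b y] //= [/code_inj Hab]; subst b.
by move/IH => ->.
Qed.

Lemma pref_st j p x : (forall q, prefix q x -> st (p ++ q) < size u) ->
  prefix (nseq j 0) (map val (enc p x)) -> st p + j <= st (p ++ take j x).
Proof.
elim: j p x => [|j IH] p [|a x] H //=.
- by rewrite addn0 cats0.
- by rewrite addn0 ?take0 cats0.
move=> /andP [Ha Hp].
have Ha' : a = nth ord0 u (st p).
  apply/eqP; rewrite -code0; apply/eqP/val_inj => /=; exact/esym/eqP.
have H' : forall q, prefix q x -> st (rcons p a ++ q) < size u.
  move=> q Hq; rewrite cat_rcons; apply: H => /=; by rewrite eqxx.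
have := IH (rcons p a) x H' Hp; rewrite cat_rcons.
have := H [::] isT; rewrite cats0 => /st_step; rewrite -Ha'.
move=> Hs Hle; apply: leq_trans Hle; rewrite addnS ltn_add2r; exact: Hs.
Qed.

Lemma enc_avoid p x : (forall q, prefix q x -> st (p ++ q) < size u) ->
  ~~ infix (nseq (size u) 0) (map val (enc p x)).
Proof.
elim: x p => [|a x IH] p H /=.
  have := H [::] isT; rewrite cats0; by case: (size u).
rewrite ?infix_consl; apply/norP; split.
  apply/negP => Hp.
  have := pref_st (size u) _ _ H Hp.
  have := H (take (size u) (a :: x)) (prefix_take _ _).
  move=> H1 H2; have := leq_ltn_trans H2 H1. lia.
apply: IH => q Hq; rewrite cat_rcons; apply: H => /=; by rewrite eqxx.
Qed.

Lemma avoid_st x : ~~ infix u x -> forall q, prefix q x -> st ([::] ++ q) < size u.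
Proof.
move=> Hx q Hq /=; have [Hle Hs] := st_spec q.
rewrite ltn_neqAle Hle andbT; apply/negP => /eqP He.
move: Hs; rewrite He take_size => Hs.
by rewrite (suffix_prefix_trans Hs Hq) in Hx.
Qed.

End Enc.

Section Occ.
Variable T : eqType.

Lemma occ3 (u s1 s2 : seq T) : 0 < size u ->
  3 <= occ u (u ++ (s1 ++ u ++ s2) ++ u).
Proof.
move=> Hu; rewrite /occ -size_filter.
have -> : 3 = size [:: 0; size (u ++ s1); size (u ++ s1 ++ u ++ s2)] by [].
apply: uniq_leq_size.
  rewrite /= !inE !size_cat; apply/andP; split; first lia.
  apply/andP; split => //; lia.
move=> i; rewrite !inE => /or3P [] /eqP ->; rewrite mem_filter mem_iota;
  apply/andP; split; try (by rewrite !size_cat /=; lia).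
- by rewrite drop0 take_size_cat.
- have -> : u ++ (s1 ++ u ++ s2) ++ u = (u ++ s1) ++ (u ++ s2 ++ u) by rewrite -!catA.
  by rewrite drop_size_cat // take_size_cat.
- have -> : u ++ (s1 ++ u ++ s2) ++ u = (u ++ s1 ++ u ++ s2) ++ u by rewrite -!catA.
  by rewrite drop_size_cat // take_size.
Qed.

Lemma decomp (w u : seq T) t : size u = t -> 2 * t <= size w -> closed_by w u ->
  [/\ u = take t w, w = u ++ take (size w - 2 * t) (drop t w) ++ u
    & ~~ infix u (take (size w - 2 * t) (drop t w))].
Proof.
move=> Hsu Hn /andP [/and4P [H0 _ Hp Hs] /eqP Hocc].
move: Hp Hs; rewrite prefixE suffixE Hsu => /eqP Hp /eqP Hs.
have Hw : w = u ++ take (size w - 2 * t) (drop t w) ++ u.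
  rewrite -{1}(cat_take_drop t w) Hp; congr (u ++ _).
  rewrite -{1}(cat_take_drop (size w - 2 * t) (drop t w)) drop_drop; congr (_ ++ _).
  rewrite -Hs; congr (drop _ w); lia.
split => //.
apply/negP => /infixP [s1 [s2 He]].
have := occ3 u s1 s2 H0; rewrite -He -Hw Hocc //.
Qed.

End Occ.

Theorem lemma15 (n t k : nat) :
  1 <= t -> 2 * t <= n -> 2 <= k ->
  Pknt k n t <= Pk k t * Ak k (n - 2 * t) (nseq t 0).
Proof.
move=> t1 tn; case: k => [|k] // k2.
rewrite /Pknt /Pk /Ak.
set m := n - 2 * t.
set W := [set w : n.-tuple 'I_k.+1 | _].
set A := [set w : t.-tuple 'I_k.+1 | _].
set B := [set w : m.-tuple 'I_k.+1 | _].
pose g (w : n.-tuple 'I_k.+1) :=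
  (insubd (nseq_tuple t (@ord0 k)) (take t w),
   insubd (nseq_tuple m (@ord0 k)) (@enc k (take t w) [::] (take m (drop t w)))).
have HW : forall w, w \in W ->
   [/\ privileged (take t w), tval w = take t w ++ take m (drop t w) ++ take t w
     & ~~ infix (take t w) (take m (drop t w))].
  move=> w; rewrite inE => /andP [_ /existsP [u /andP [Hcl Hpu]]].
  have Hn' : 2 * t <= size w by rewrite size_tuple.
  have [Hu Hw Hinf] := @decomp _ w u t (size_tuple u) Hn' Hcl.
  rewrite size_tuple -/m in Hu Hw Hinf.
  by rewrite -Hu.
have Hst : forall w : n.-tuple 'I_k.+1, size (take t w) = t.
  move=> w; rewrite size_take size_tuple; case: ltnP => //; lia.
have Hsm : forall w : n.-tuple 'I_k.+1, size (take m (drop t w)) = m.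
  move=> w; rewrite size_take size_drop size_tuple; case: ltnP => //; lia.
rewrite -cardsX -(card_in_imset (f := g) (D := W)).
  apply: subset_leq_card; apply/subsetP => _ /imsetP [w Hw ->].
  have [Hp _ Hi] := HW w Hw.
  rewrite in_setX !inE /= !val_insubd Hst eqxx size_enc Hsm eqxx Hp /=.
  rewrite -{1}(Hst w); apply: enc_avoid; exact: avoid_st.
move=> w1 w2 H1 H2 /(congr1 (fun p => (val p.1, val p.2))) /=.
rewrite !val_insubd !Hst !size_enc !Hsm !eqxx => -[Hu Hx].
rewrite Hu in Hx; have Hx' := @enc_inj k _ _ _ _ Hx.
have [_ E1 _] := HW w1 H1; have [_ E2 _] := HW w2 H2.
by apply: val_inj; rewrite /= E1 E2 Hu Hx'.
Qed.
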